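(* For any probability distributions $\mathbf{p},\mathbf{q}$ on $G_\Delta$ (i.e. $\mathbf{p},\mathbf{q}\in\mathbb{R}_{\ge0}^{G_\Delta}$ with $\|\mathbf{p}\|_1=\|\mathbf{q}\|_1=1$) and any $\sigma>0$, $\mathrm{KL}(\tilde H^\sigma_{\mathbf{p}}\,\|\,\tilde H^\sigma_{\mathbf{q}})\le\frac{\mathrm{EMD}(\mathbf{p},\mathbf{q})}{2\sigma^2}$.
   Context: $G_\Delta=\{(i/\Delta,j/\Delta):i,j\in\{0,\dots,\Delta-1\}\}$, $\tilde G_\Delta=\{(i/\Delta,j/\Delta):i,j\in\mathbb{Z}\}$. $\tilde H^\sigma_{\mathbf{p}}(a)=\sum_{a'\in G_\Delta}\frac1Z e^{-\|a-a'\|_2^2/(2\sigma^2)}\mathbf{p}(a')$ for $a\in\tilde G_\Delta$, with $Z=\sum_{d\in\tilde G_\Delta}e^{-\|d\|_2^2/(2\sigma^2)}$. $\mathrm{KL}(P\|Q)=\sum_a P(a)\ln(P(a)/Q(a))$. $\mathrm{EMD}(\mathbf{p},\mathbf{q})=\min_\gamma\sum_{x,y\in G_\Delta}\gamma(x,y)\|x-y\|_1$ over nonnegative couplings $\gamma$ with marginals $\mathbf{p},\mathbf{q}$. *)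

(* Defs.v *)
From HB Require Import structures.
From mathcomp Require Import all_boot all_order all_algebra.
From mathcomp Require Import all_classical all_reals all_analysis.
Set Implicit Arguments. Unset Strict Implicit. Unset Printing Implicit Defensive.
Import Order.TTheory GRing.Theory Num.Theory.
Local Open Scope ring_scope.

(* The finite grid G_Delta = {(i/Delta, j/Delta) : i,j in {0..Delta-1}},
   indexed by (i,j) : 'I_Delta * 'I_Delta. *)
Definition grid (Delta : nat) := ('I_Delta * 'I_Delta)%type.

(* The infinite lattice tilde G_Delta = {(i/Delta, j/Delta) : i,j in Z},
   indexed by (i,j) : int * int. *)
Definition lattice := (int * int)%type.

Definition lattice_sum {R : realType} (f : lattice -> R) : R :=
  limn (fun N : nat => \sum_(i < (2 * N).+1) \sum_(j < (2 * N).+1)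
          f ((i%:Z - N%:Z)%R, (j%:Z - N%:Z)%R)).

Definition sqdist {R : realType} (Delta : nat) (a : lattice) (a' : grid Delta) : R :=
  ((a.1%:~R - (a'.1 : nat)%:R) / Delta%:R) ^+ 2
  + ((a.2%:~R - (a'.2 : nat)%:R) / Delta%:R) ^+ 2.

Definition Znorm {R : realType} (Delta : nat) (sigma : R) : R :=
  lattice_sum (fun d : lattice =>
    expR (- (((d.1%:~R / Delta%:R) ^+ 2 + (d.2%:~R / Delta%:R) ^+ 2)
             / (2 * sigma ^+ 2)))).

Definition Htilde {R : realType} (Delta : nat) (sigma : R)
    (p : grid Delta -> R) (a : lattice) : R :=
  \sum_(a' : grid Delta)
     (Znorm Delta sigma)^-1 * expR (- (@sqdist R Delta a a' / (2 * sigma ^+ 2))) * p a'.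

Definition KL {R : realType} (P Q : lattice -> R) : R :=
  lattice_sum (fun a => P a * ln (P a / Q a)).

Definition is_distr {R : realType} (Delta : nat) (p : grid Delta -> R) : Prop :=
  (forall x, 0 <= p x) /\ \sum_(x : grid Delta) p x = 1.

Definition is_coupling {R : realType} (Delta : nat) (p q : grid Delta -> R)
    (g : grid Delta -> grid Delta -> R) : Prop :=
  (forall x y, 0 <= g x y) /\
  (forall x, \sum_(y : grid Delta) g x y = p x) /\
  (forall y, \sum_(x : grid Delta) g x y = q y).

Definition l1dist {R : realType} (Delta : nat) (x y : grid Delta) : R :=
  `|((x.1 : nat)%:R - (y.1 : nat)%:R) / Delta%:R|
  + `|((x.2 : nat)%:R - (y.2 : nat)%:R) / Delta%:R|.

Definition transport_cost {R : realType} (Delta : nat)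
    (g : grid Delta -> grid Delta -> R) : R :=
  \sum_(x : grid Delta) \sum_(y : grid Delta) g x y * @l1dist R Delta x y.

(* EMD(p,q) = min over couplings of the transport cost (taken as inf; the
   minimum is attained, so they agree). *)
Definition EMD {R : realType} (Delta : nat) (p q : grid Delta -> R) : R :=
  inf [set @transport_cost R Delta g | g in is_coupling p q].

(* Main.v *)
Require Import Defs.
From HB Require Import structures.
From mathcomp Require Import all_boot all_order all_algebra.
From mathcomp Require Import all_classical all_reals all_analysis.
From mathcomp Require Import zify ring lra.
Import Order.TTheory GRing.Theory Num.Theory.
Import numFieldNormedType.Exports.
Local Open Scope ring_scope.
Set Implicit Arguments. Unset Strict Implicit. Unset Printing Implicit Defensive.
Local Open Scope classical_set_scope. Local Open Scope ring_scope.
Section OneD.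
Variable R : realType.
Implicit Types (h : int -> R).

Definition T (N : nat) (h : int -> R) : R := \sum_(i < (2 * N).+1) h (i%:Z - N%:Z).

Lemma T_rec N h : T N.+1 h = h (- (N.+1)%:Z) + T N h + h (N.+1)%:Z.
Proof.
rewrite /T.
have -> : (2 * N.+1).+1 = ((2*N).+1).+2 by rewrite mulnS.
rewrite big_ord_recl big_ord_recr /= -addrA; congr (_ + (_ + _)).
all: try (apply: eq_bigr => i _).
all: f_equal; rewrite /bump /= ?leq0n ?add1n; lia.
Qed.

Lemma T_recr N h : T N.+1 h = T N (fun k => h (k - 1)) + h N%:Z + h (N.+1)%:Z.
Proof.
rewrite /T.
have -> : (2 * N.+1).+1 = ((2*N).+1).+2 by rewrite mulnS.
rewrite big_ord_recr big_ord_recr /=; congr (_ + _ + _).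
all: try (apply: eq_bigr => i _).
all: f_equal; rewrite /bump /= ?leq0n ?add1n; lia.
Qed.

Lemma T_shift1 N h : T N (fun k => h (k - 1)) = h (- (N.+1)%:Z) + T N h - h N%:Z.
Proof.
have := T_recr N h; rewrite T_rec => E; lra.
Qed.

Lemma T_shift N h (s : nat) : T N (fun k => h (k - s%:Z)) =
  T N h + \sum_(j < s) (h (- (N.+1 + j)%:Z) - h (N%:Z - j%:Z)).
Proof.
elim: s => [|s IH].
  rewrite big_ord0 addr0; apply: eq_bigr => i _; f_equal; lia.
have -> : T N (fun k => h (k - s.+1%:Z)) = T N (fun k => (fun k => h (k - s%:Z)) (k - 1)).
  apply: eq_bigr => i _; f_equal; lia.
rewrite (T_shift1 N (fun k => h (k - s%:Z))) IH big_ord_recr /=.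
have -> : (- (N.+1)%:Z - s%:Z) = - (N.+1 + s)%:Z by lia.
ring.
Qed.

Lemma T_odd N h : (forall k, h (- k) = - h k) -> T N h = 0.
Proof.
move=> odd.
have E : T N h = - T N h.
  rewrite {1}/T (reindex_inj rev_ord_inj) /= /T -sumrN.
  apply: eq_bigr => i _; rewrite -odd; congr h.
  have := ltn_ord i; lia.
have : 2 * T N h = 0 by rewrite mulr2n mulrDl mul1r {1}E addNr.
by move/eqP; rewrite mulf_eq0 pnatr_eq0 /= => /eqP.
Qed.

Lemma T_ge0 N h : (forall k, 0 <= h k) -> 0 <= T N h.
Proof. by move=> h0; apply: sumr_ge0 => i _. Qed.

Lemma T_le N h1 h2 : (forall k, h1 k <= h2 k) -> T N h1 <= T N h2.
Proof. by move=> hl; apply: ler_sum => i _. Qed.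

Lemma T_mono N h : (forall k, 0 <= h k) -> T N h <= T N.+1 h.
Proof. move=> h0; rewrite T_rec; have := h0 (- (N.+1)%:Z); have := h0 (N.+1)%:Z; lra. Qed.

Lemma T_sum (I : finType) N (F : I -> int -> R) :
  T N (fun k => \sum_(x : I) F x k) = \sum_(x : I) T N (F x).
Proof. by rewrite /T exchange_big. Qed.

Lemma T_scale N a h : T N (fun k => a * h k) = a * T N h.
Proof. by rewrite /T mulr_sumr. Qed.

Lemma T_add N h1 h2 : T N (fun k => h1 k + h2 k) = T N h1 + T N h2.
Proof. by rewrite /T big_split. Qed.

Lemma T_opp N h : T N (fun k => - h k) = - T N h.
Proof. by rewrite /T sumrN. Qed.

Definition SB (N : nat) (f : lattice -> R) : R := T N (fun i => T N (fun j => f (i, j))).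

Lemma lattice_sumE f : lattice_sum f = limn (fun N : nat => SB N f).
Proof. by []. Qed.

Lemma S_prod N (f g : int -> R) : SB N (fun a => f a.1 * g a.2) = T N f * T N g.
Proof.
rewrite /SB /T mulr_suml; apply: eq_bigr => i _; by rewrite mulr_sumr.
Qed.

Lemma S_ge0 N f : (forall a, 0 <= f a) -> 0 <= SB N f.
Proof. by move=> f0; apply: T_ge0 => i; apply: T_ge0. Qed.

Lemma S_mono N f : (forall a, 0 <= f a) -> SB N f <= SB N.+1 f.
Proof.
move=> f0; rewrite /SB.
apply: (le_trans (T_le _ (fun i => T_mono N (fun j => f0 (i, j))))).
by apply: T_mono => i; apply: T_ge0.
Qed.

Lemma S_sum (I : finType) N (F : I -> lattice -> R) :
  SB N (fun a => \sum_(x : I) F x a) = \sum_(x : I) SB N (F x).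
Proof.
rewrite /SB -T_sum; apply: eq_bigr => i _; by rewrite T_sum.
Qed.

Lemma S_scale N a f : SB N (fun k => a * f k) = a * SB N f.
Proof. rewrite /SB -T_scale; apply: eq_bigr => i _; by rewrite T_scale. Qed.

Lemma S_add N f1 f2 : SB N (fun k => f1 k + f2 k) = SB N f1 + SB N f2.
Proof. rewrite /SB -T_add; apply: eq_bigr => i _; by rewrite T_add. Qed.

Lemma S_opp N f : SB N (fun k => - f k) = - SB N f.
Proof. rewrite /SB -T_opp; apply: eq_bigr => i _; by rewrite T_opp. Qed.

Lemma S_le N f1 f2 : (forall a, f1 a <= f2 a) -> SB N f1 <= SB N f2.
Proof. by move=> hl; apply: T_le => i; apply: T_le. Qed.

End OneD.
Section Vanish.
Variable R : realType.

Lemma vanish (h : int -> R) (K : R) (c : int) :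
  (forall k : int, `|h k| * `|(k%:~R : R)| <= K) ->
  (fun n : nat => h (n%:Z + c)) @ \oo --> 0.
Proof.
move=> hK; apply/cvgr0Pnorm_lt => e e0.
have K0 : 0 <= K by apply: le_trans (hK 0) ; rewrite mulr_ge0.
near=> n.
have Hn : K / e + `|(c%:~R : R)| < n%:R by near: n; apply: nbhs_infty_gtr.
set m := `|((n%:Z + c)%:~R : R)|.
have mge : n%:R - `|(c%:~R : R)| <= m.
  rewrite /m intrD; apply: le_trans (ler_norm _).
  have := ler_norm (- (c%:~R : R)); rewrite normrN.
  have -> : ((n%:Z)%:~R : R) = n%:R by []. lra.
have Km : K < e * m.
  have : K / e < m by lra.
  by rewrite ltr_pdivrMr // mulrC.
have := hK (n%:Z + c); rewrite -/m => H.
have m0 : 0 < m.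
  have : 0 <= m by apply: normr_ge0.
  nra.
nra.
Unshelve. all: by end_near.
Qed.

End Vanish.
Section Gauss.
Variable R : realType.
Variable Delta : nat.
Variable sigma : R.
Hypothesis HD : (0 < Delta)%N.
Hypothesis Hs : 0 < sigma.

Definition cc : R := 2 * sigma ^+ 2.
Definition g (k : int) : R := expR (- ((k%:~R / Delta%:R) ^+ 2 / cc)).
Definition phi (k : int) : R := g k * (k%:~R / Delta%:R).
Definition KK : R := Delta%:R * (cc + 1).

Lemma cc_gt0 : 0 < cc.
Proof. by rewrite /cc mulr_gt0 // exprn_gt0. Qed.

Lemma D_gt0 : 0 < (Delta%:R : R).
Proof. by rewrite ltr0n. Qed.

Lemma g_gt0 k : 0 < g k.
Proof. exact: expR_gt0. Qed.

Lemma g_even k : g (- k) = g k.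
Proof. by rewrite /g intrN mulNr sqrrN. Qed.

Lemma phi_odd k : phi (- k) = - phi k.
Proof. by rewrite /phi g_even intrN mulNr mulrN. Qed.

Lemma g0 : g 0 = 1.
Proof. by rewrite /g mul0r expr0n /= mul0r oppr0 expR0. Qed.

Lemma g_le1 k : g k <= 1.
Proof.
rewrite /g -expR0 ler_expR oppr_le0 divr_ge0 // ?sqr_ge0 //.
by apply: ltW; apply: cc_gt0.
Qed.

Lemma g_sq k : g k * (k%:~R / Delta%:R) ^+ 2 <= cc.
Proof.
set t := k%:~R / Delta%:R.
have c0 := cc_gt0.
set y := t ^+ 2 / cc.
have y0 : 0 <= y by rewrite /y divr_ge0 // ?sqr_ge0 // ltW.
have ey : y <= expR y by apply: le_trans (expR_ge1Dx y); lra.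
have E : g k * expR y = 1 by rewrite /g -/t -/y -expRD addNr expR0.
have : g k * y <= 1 by rewrite -E ler_wpM2l // ltW // g_gt0.
have -> : t ^+ 2 = y * cc by rewrite /y mulfVK // gt_eqF.
have := g_gt0 k; nra.
Qed.

Lemma absk k : `|(k%:~R : R)| = Delta%:R * `|k%:~R / Delta%:R|.
Proof.
rewrite normrM normfV (ger0_norm (ltW D_gt0)) mulrC divfK //.
by rewrite gt_eqF // D_gt0.
Qed.

Lemma g_bound k : `|g k| * `|(k%:~R : R)| <= KK.
Proof.
rewrite absk /KK (ger0_norm (ltW (g_gt0 k))).
have := g_sq k; have := g_gt0 k; have := D_gt0.
set t := k%:~R / Delta%:R => D0 g0' H.
have ht : `|t| <= t ^+ 2 + 1.
  have : `|t| ^+ 2 = t ^+ 2 by rewrite real_normK // num_real.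
  have := normr_ge0 t; nra.
have := g_le1 k => g1.
have : g k * `|t| <= g k * (t ^+ 2 + 1) by rewrite ler_wpM2l // ltW.
have : g k * `|t| <= cc + 1 by nra.
nra.
Qed.

Lemma phi_bound k : `|phi k| * `|(k%:~R : R)| <= KK.
Proof.
rewrite absk /KK /phi normrM (ger0_norm (ltW (g_gt0 k))).
have := g_sq k; have := g_gt0 k; have := D_gt0.
set t := k%:~R / Delta%:R => D0 g0' H.
have Ht : `|t| ^+ 2 = t ^+ 2 by rewrite real_normK // num_real.
have -> : g k * `|t| * (Delta%:R * `|t|) = Delta%:R * (g k * t ^+ 2) by rewrite -Ht; ring.
rewrite ler_wpM2l ?ltW //; lra.
Qed.

Lemma sum_vanish (h : int -> R) (s : nat) :
  (forall k, `|h k| * `|(k%:~R : R)| <= KK) ->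
  (fun N : nat => \sum_(j < s) (h (- (N.+1 + j)%:Z) - h (N%:Z - j%:Z))) @ \oo --> 0.
Proof.
move=> hb; elim: s => [|s IH].
  under eq_fun do rewrite big_ord0. exact: cvg_cst.
under eq_fun do rewrite big_ord_recr /=.
have A : (fun N : nat => h (- (N.+1 + s)%:Z)) @ \oo --> 0.
  have hb' : forall k, `|(fun k => h (- k)) k| * `|(k%:~R : R)| <= KK.
    by move=> k /=; have := hb (- k); rewrite intrN normrN.
  have := vanish (s.+1)%:Z hb'.
  have -> : (fun n : nat => h (- (n%:Z + s.+1%:Z))) = (fun N : nat => h (- (N.+1 + s)%:Z)).
    by apply/funext => n; congr h; lia.
  by [].
have B : (fun N : nat => h (N%:Z - s%:Z)) @ \oo --> 0 by exact: vanish (- s%:Z) hb.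
have := cvgD IH (cvgB A B); rewrite subr0 addr0; apply.
Qed.

Definition rr : R := expR (- (1 / (cc * Delta%:R ^+ 2))).

Lemma rr_gt0 : 0 < rr. Proof. exact: expR_gt0. Qed.
Lemma rr_lt1 : rr < 1.
Proof.
rewrite /rr expR_lt1 oppr_lt0 divr_gt0 // mulr_gt0 ?cc_gt0 // exprn_gt0 //; exact: D_gt0.
Qed.

Lemma g_geo (m : nat) : g m%:Z <= rr ^+ m.
Proof.
rewrite /g /rr -expRM_natl ler_expR.
have c0 := cc_gt0; have D0 := D_gt0.
have -> : ((m%:Z)%:~R : R) = m%:R by [].
have -> : (m%:R / Delta%:R) ^+ 2 / cc = m%:R ^+ 2 * (1 / (cc * Delta%:R ^+ 2)).
  field; apply/andP; split; rewrite gt_eqF //.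
have a0 : 0 < 1 / (cc * Delta%:R ^+ 2) by rewrite divr_gt0 // mulr_gt0 // exprn_gt0.
have mm : (m%:R : R) <= m%:R ^+ 2.
  case: m => [|m]; first by rewrite expr0n.
  rewrite expr2 ler_peMl // ler1n //.
rewrite mulrN lerN2; apply: ler_wpM2r => //; exact: ltW.
Qed.

Lemma T_g_inv N : T N g <= (1 + rr - 2 * rr ^+ N.+1) / (1 - rr).
Proof.
have r0 := rr_gt0; have r1 := rr_lt1.
have r1' : 1 - rr != 0 by rewrite subr_eq0 eq_sym lt_eqF.
elim: N => [|N IH].
  rewrite /T big_ord1 /= g0 expr1.
  have -> : 1 + rr - 2 * rr = 1 - rr by ring.
  by rewrite divff.
rewrite T_rec.
have h1 : g (- N.+1%:Z) <= rr ^+ N.+1 by rewrite g_even g_geo.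
have h2 : g (N.+1%:Z) <= rr ^+ N.+1 by rewrite g_geo.
have -> : (1 + rr - 2 * rr ^+ N.+2) / (1 - rr) = 2 * rr ^+ N.+1 + (1 + rr - 2 * rr ^+ N.+1) / (1 - rr).
  rewrite [rr ^+ N.+2]exprS; move: (rr ^+ N.+1) => q; field; exact: r1'.
lra.
Qed.

Lemma cvg_Tg : cvgn (fun N => T N g).
Proof.
apply/cvg_ex; eexists; apply: nondecreasing_cvgn.
  by apply/nondecreasing_seqP => n; apply: T_mono => k; apply: ltW; apply: g_gt0.
exists ((1 + rr) / (1 - rr)) => _ [N _ <-].
apply: le_trans (T_g_inv N) _.
have r0 := rr_gt0; have r1 := rr_lt1.
rewrite ler_pM2r ?invr_gt0 ?subr_gt0 //.
have := exprn_ge0 N.+1 (ltW r0); lra.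
Qed.

Definition z1 : R := limn (fun N => T N g).

Lemma z1_ge1 : 1 <= z1.
Proof.
have := @nondecreasing_cvgn_le _ (fun N => T N g) _ cvg_Tg 0%N.
rewrite /T big_ord1 /= g0; apply.
by apply/nondecreasing_seqP => n; apply: T_mono => k; apply: ltW; apply: g_gt0.
Qed.

Lemma Tg_le_z1 N : T N g <= z1.
Proof.
apply: (@nondecreasing_cvgn_le _ (fun N => T N g) _ cvg_Tg N).
by apply/nondecreasing_seqP => n; apply: T_mono => k; apply: ltW; apply: g_gt0.
Qed.

Lemma cvg_E (s : nat) : (fun N : nat => T N (fun k => g (k - s%:Z))) @ \oo --> z1.
Proof.
under eq_fun do rewrite T_shift.
rewrite -[z1]addr0; apply: cvgD; first exact: cvg_Tg.
exact: sum_vanish g_bound.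
Qed.

Lemma cvg_M (s : nat) : (fun N : nat => T N (fun k => phi (k - s%:Z))) @ \oo --> 0.
Proof.
under eq_fun do rewrite T_shift (T_odd _ phi_odd) add0r.
exact: sum_vanish phi_bound.
Qed.

End Gauss.
Section Helpers.
Variable R : realType.

Lemma cvg_sum_seq (I : eqType) (r : seq I) (F : I -> nat -> R) (l : I -> R) :
  (forall i, F i @ \oo --> l i) ->
  (fun N : nat => \sum_(i <- r) F i N) @ \oo --> \sum_(i <- r) l i.
Proof.
move=> hF; elim: r => [|i r IH].
  under eq_fun do rewrite big_nil. rewrite big_nil; exact: cvg_cst.
under eq_fun do rewrite big_cons. rewrite big_cons.
exact: cvgD (hF i) IH.
Qed.

Lemma cvg_sum_fin (I : finType) (F : I -> nat -> R) (l : I -> R) :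
  (forall i, F i @ \oo --> l i) ->
  (fun N : nat => \sum_(i : I) F i N) @ \oo --> \sum_(i : I) l i.
Proof. exact: cvg_sum_seq. Qed.

Lemma ln_div (x y : R) : 0 < x -> 0 < y -> ln (x / y) = ln x - ln y.
Proof.
move=> x0 y0; rewrite lnM ?posrE ?invr_gt0 // lnV ?posrE //.
Qed.

Lemma ln_ge (t : R) : 0 < t -> 1 - t^-1 <= ln t.
Proof.
move=> t0.
have h : -1 < t^-1 - 1 by have := invr_gt0 t; rewrite t0 => /= ti; lra.
have := le_ln1Dx h; rewrite addrC subrK lnV ?posrE //; lra.
Qed.

Lemma logsum (I : finType) (w a b : I -> R) :
  (forall i, 0 <= w i) -> (forall i, 0 < a i) -> (forall i, 0 < b i) ->
  0 < \sum_i w i * a i -> 0 < \sum_i w i * b i ->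
  (\sum_i w i * a i) * ln ((\sum_i w i * a i) / (\sum_i w i * b i))
    <= \sum_i w i * a i * ln (a i / b i).
Proof.
move=> w0 a0 b0; set A := \sum_i w i * a i; set B := \sum_i w i * b i => A0 B0.
rewrite -subr_ge0.
have -> : \sum_i w i * a i * ln (a i / b i) - A * ln (A / B) =
          \sum_i (w i * a i * ln (a i / b i) - w i * a i * ln (A / B)).
  by rewrite sumrB -mulr_suml.
have E : \sum_i (w i * a i - w i * b i * (A / B)) = 0.
  by rewrite sumrB -mulr_suml -/A -/B mulrCA divff ?mulr1 ?subrr // gt_eqF.
rewrite -[X in X <= _]E; apply: ler_sum => i _.
have ai := a0 i; have bi := b0 i; have wi := w0 i.
have ab0 : 0 < a i / b i by rewrite divr_gt0.
have AB0 : 0 < A / B by rewrite divr_gt0.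
have t0 : 0 < (a i / b i) / (A / B) by rewrite divr_gt0.
have := ln_ge t0; rewrite ln_div // invf_div => H.
have wa0 : 0 <= w i * a i by rewrite mulr_ge0 // ltW.
have := ler_wpM2l wa0 H.
have -> : w i * a i * (1 - A / B / (a i / b i)) = w i * a i - w i * b i * (A / B).
  by field; rewrite !gt_eqF.
move=> H2; rewrite -mulrBr; exact: H2.
Qed.

Lemma kl_term (P Q : R) : 0 < P -> 0 < Q -> 0 <= P * ln (P / Q) - P + Q.
Proof.
move=> P0 Q0.
have t0 : 0 < P / Q by rewrite divr_gt0.
have := ln_ge t0; rewrite invf_div => H.
have := ler_wpM2l (ltW P0) H.
have -> : P * (1 - Q / P) = P - Q by field; rewrite gt_eqF.
move=> H2; lra.
Qed.

End Helpers.
Lemma natz_R (R : realType) (n : nat) : ((n%:Z)%:~R : R) = n%:R.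
Proof. by []. Qed.

Section Main.
Variable R : realType.
Variable Delta : nat.
Variable sigma : R.
Hypothesis HD : (0 < Delta)%N.
Hypothesis Hs : 0 < sigma.

Local Notation Zn := (Znorm Delta sigma).
Local Notation gg := (@g R Delta sigma).
Local Notation pphi := (@phi R Delta sigma).
Local Notation zz := (@z1 R Delta sigma).
Local Notation c2 := (@cc R sigma).

Lemma Zn_eq : Zn = zz ^+ 2.
Proof.
rewrite /Znorm lattice_sumE.
have -> : (fun d : lattice => expR (- (((d.1%:~R / Delta%:R) ^+ 2 + (d.2%:~R / Delta%:R) ^+ 2) / (2 * sigma ^+ 2)))) = (fun a => gg a.1 * gg a.2).
  by apply/funext => d; rewrite /g /cc -expRD mulrDl opprD.
under eq_fun do rewrite S_prod.
rewrite expr2; apply: cvg_lim; first exact: Rhausdorff.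
exact: cvgM (cvg_Tg HD Hs) (cvg_Tg HD Hs).
Qed.

Lemma Zn_gt0 : 0 < Zn.
Proof.
rewrite Zn_eq; have := z1_ge1 HD Hs; move=> h.
by apply: exprn_gt0; lra.
Qed.

Definition ker (a : lattice) (x : grid Delta) : R :=
  (Znorm Delta sigma)^-1 * expR (- (@sqdist R Delta a x / (2 * sigma ^+ 2))).

Lemma ker_split a x : ker a x =
  Zn^-1 * (gg (a.1 - (x.1 : nat)%:Z) * gg (a.2 - (x.2 : nat)%:Z)).
Proof.
by rewrite /ker /sqdist /g /cc -expRD mulrDl opprD !intrB !natz_R.
Qed.

Lemma ker_gt0 a x : 0 < ker a x.
Proof. by rewrite /ker mulr_gt0 ?invr_gt0 ?Zn_gt0 ?expR_gt0. Qed.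

Lemma Ht_eq (r : grid Delta -> R) a : Htilde sigma r a = \sum_x ker a x * r x.
Proof. by []. Qed.

Lemma Ht_gt0 (r : grid Delta -> R) a : is_distr r -> 0 < Htilde sigma r a.
Proof.
move=> [r0 r1]; rewrite Ht_eq lt0r sumr_ge0 ?andbT; last first.
  by move=> x _; rewrite mulr_ge0 // ltW // ker_gt0.
apply/negP => /eqP H.
have := psumr_eq0P (fun x _ => mulr_ge0 (ltW (ker_gt0 a x)) (r0 x)) H.
move=> Hx; move: r1; rewrite big1; first by move/eqP; rewrite eq_sym oner_eq0.
move=> x _; have := Hx x isT; move/eqP; rewrite mulf_eq0 gt_eqF ?ker_gt0 //=.
by move/eqP.
Qed.

Lemma ln_ker a x y : ln (ker a x / ker a y) = (sqdist a y - sqdist a x) / c2.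
Proof.
have Z0 := Zn_gt0.
have -> : ker a x / ker a y = expR (- (@sqdist R Delta a x / (2 * sigma ^+ 2))) /
                                expR (- (@sqdist R Delta a y / (2 * sigma ^+ 2))).
  rewrite /ker; field; rewrite !gt_eqF ?expR_gt0 //.
rewrite -expRB expRK /cc.
have : 0 < 2 * sigma ^+ 2 by rewrite mulr_gt0 // exprn_gt0.
move=> h; field; rewrite gt_eqF //.
Qed.

Definition dd1 (x y : grid Delta) : R := ((x.1 : nat)%:R - (y.1 : nat)%:R) / Delta%:R.
Definition dd2 (x y : grid Delta) : R := ((x.2 : nat)%:R - (y.2 : nat)%:R) / Delta%:R.
Definition DD x y := dd1 x y ^+ 2 + dd2 x y ^+ 2.

Lemma term_split x y a : ker a x * ((sqdist a y - sqdist a x) / c2) =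
  (Zn^-1 / c2) * (DD x y * (gg (a.1 - (x.1 : nat)%:Z) * gg (a.2 - (x.2 : nat)%:Z))
    + 2 * dd1 x y * (pphi (a.1 - (x.1 : nat)%:Z) * gg (a.2 - (x.2 : nat)%:Z))
    + 2 * dd2 x y * (gg (a.1 - (x.1 : nat)%:Z) * pphi (a.2 - (x.2 : nat)%:Z))).
Proof.
rewrite ker_split /phi /sqdist /DD /dd1 /dd2 !intrB !natz_R.
have D0 : (Delta%:R : R) != 0 by rewrite pnatr_eq0 -lt0n.
have c0 : c2 != 0 by rewrite gt_eqF // cc_gt0.
field; rewrite D0 c0 gt_eqF ?Zn_gt0 //.
Qed.


Lemma SB_ext N (f1 f2 : lattice -> R) : (forall a, f1 a = f2 a) -> SB N f1 = SB N f2.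
Proof. by move=> h; rewrite /SB /T; apply: eq_bigr => i _; apply: eq_bigr => j _; rewrite h. Qed.

Lemma cvg_term x y :
  (fun N : nat => SB N (fun a => ker a x * ((sqdist a y - sqdist a x) / c2))) @ \oo --> DD x y / c2.
Proof.
set s1 := (x.1 : nat); set s2 := (x.2 : nat).
have -> : (fun N : nat => SB N (fun a => ker a x * ((sqdist a y - sqdist a x) / c2))) =
  (fun N => (Zn^-1 / c2) * (DD x y * (T N (fun k => gg (k - s1%:Z)) * T N (fun k => gg (k - s2%:Z)))
    + 2 * dd1 x y * (T N (fun k => pphi (k - s1%:Z)) * T N (fun k => gg (k - s2%:Z)))
    + 2 * dd2 x y * (T N (fun k => gg (k - s1%:Z)) * T N (fun k => pphi (k - s2%:Z))))).
  apply/funext => N; rewrite (SB_ext N (term_split x y)) S_scale !S_add !S_scale.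
  rewrite (S_prod N (fun k => gg (k - s1%:Z)) (fun k => gg (k - s2%:Z))).
  rewrite (S_prod N (fun k => pphi (k - s1%:Z)) (fun k => gg (k - s2%:Z))).
  by rewrite (S_prod N (fun k => gg (k - s1%:Z)) (fun k => pphi (k - s2%:Z))).
have E1 := cvg_E HD Hs s1; have E2 := cvg_E HD Hs s2.
have M1 := cvg_M HD Hs s1; have M2 := cvg_M HD Hs s2.
have := cvgM (cvg_cst (Zn^-1 / c2)) (cvgD (cvgD (cvgM (cvg_cst (DD x y)) (cvgM E1 E2))
   (cvgM (cvg_cst (2 * dd1 x y)) (cvgM M1 E2))) (cvgM (cvg_cst (2 * dd2 x y)) (cvgM E1 M2))).
have -> : Zn^-1 / c2 * (DD x y * (zz * zz) + 2 * dd1 x y * (0 * zz) + 2 * dd2 x y * (zz * 0)) = DD x y / c2.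
  rewrite Zn_eq !mul0r !mulr0 !addr0.
  have z0 : zz != 0 by have := z1_ge1 HD Hs; move=> h; rewrite gt_eqF //; lra.
  field; rewrite z0 gt_eqF ?cc_gt0 //.
by apply; typeclasses eauto.
Qed.

Lemma cvg_Ht (r : grid Delta -> R) : cvgn (fun N : nat => SB N (Htilde sigma r)).
Proof.
apply/cvg_ex; eexists.
have -> : (fun N : nat => SB N (Htilde sigma r)) = (fun N => \sum_x r x * (Zn^-1 *
    (T N (fun k => gg (k - (x.1 : nat)%:Z)) * T N (fun k => gg (k - (x.2 : nat)%:Z))))).
  apply/funext => N; rewrite (SB_ext N (Ht_eq r)) S_sum; apply: eq_bigr => x _.
  rewrite (SB_ext N (fun a => (mulrC (ker a x) (r x)))) S_scale.
  rewrite (SB_ext N (fun a => ker_split a x)) S_scale.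
  by rewrite (S_prod N (fun k => gg (k - (x.1 : nat)%:Z)) (fun k => gg (k - (x.2 : nat)%:Z))).
apply: cvg_sum_fin => x.
exact: cvgM (cvg_cst _) (cvgM (cvg_cst _) (cvgM (cvg_E HD Hs _) (cvg_E HD Hs _))).
Qed.

End Main.
Section Coupling.
Variable R : realType.
Variable Delta : nat.
Variable sigma : R.
Hypothesis HD : (0 < Delta)%N.
Hypothesis Hs : 0 < sigma.
Variables (p q : grid Delta -> R) (gam : grid Delta -> grid Delta -> R).
Hypotheses (hp : is_distr p) (hq : is_distr q) (hg : is_coupling p q gam).

Local Notation Hp := (Htilde sigma p).
Local Notation Hq := (Htilde sigma q).
Local Notation c2 := (@cc R sigma).
Local Notation kk := (@ker R Delta sigma).
Local Notation DD := (@DD R Delta).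
Local Notation dd1 := (@dd1 R Delta).
Local Notation dd2 := (@dd2 R Delta).

Definition rhs (a : lattice) : R :=
  \sum_x \sum_y gam x y * (kk a x * ((sqdist a y - sqdist a x) / c2)).

Lemma pointwise a : Hp a * ln (Hp a / Hq a) <= rhs a.
Proof.
have [g0 [gp gq]] := hg.
have EP : Hp a = \sum_x \sum_y gam x y * kk a x.
  rewrite Ht_eq; apply: eq_bigr => x _; rewrite -gp mulr_sumr; apply: eq_bigr => y _; exact: mulrC.
have EQ : Hq a = \sum_x \sum_y gam x y * kk a y.
  rewrite Ht_eq exchange_big; apply: eq_bigr => y _; rewrite -gq mulr_sumr; apply: eq_bigr => x _; exact: mulrC.
have ER : rhs a = \sum_x \sum_y gam x y * kk a x * ln (kk a x / kk a y).
  apply: eq_bigr => x _; apply: eq_bigr => y _; by rewrite (ln_ker HD Hs) mulrA.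
have P0 := Ht_gt0 HD Hs a hp; have Q0 := Ht_gt0 HD Hs a hq.
rewrite ER; rewrite EP EQ in P0 Q0 *.
rewrite !pair_big /=. rewrite !pair_big /= in P0 Q0.
apply: (logsum (w := fun xy => gam xy.1 xy.2) (a := fun xy => kk a xy.1) (b := fun xy => kk a xy.2)) => //.
all: try (by move=> xy; apply: g0).
all: try (by move=> xy; apply: (ker_gt0 HD Hs)).
Qed.

Lemma SB_rhs N : SB N rhs =
  \sum_x \sum_y gam x y * SB N (fun a => kk a x * ((sqdist a y - sqdist a x) / c2)).
Proof.
rewrite /rhs S_sum; apply: eq_bigr => x _; rewrite S_sum; apply: eq_bigr => y _.
by rewrite S_scale.
Qed.

Lemma cvg_rhs : (fun N => SB N rhs) @ \oo --> \sum_x \sum_y gam x y * (DD x y / c2).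
Proof.
under eq_fun do rewrite SB_rhs.
apply: cvg_sum_fin => x; apply: cvg_sum_fin => y.
have := cvgM (cvg_cst (gam x y)) (@cvg_term _ _ _ HD Hs x y).
by apply; typeclasses eauto.
Qed.

Lemma KL_le : KL Hp Hq <= \sum_x \sum_y gam x y * (DD x y / c2).
Proof.
set F := fun a => Hp a * ln (Hp a / Hq a).
set G := fun N => SB N (fun a => F a - Hp a + Hq a).
have Gmono : nondecreasing_seq G.
  apply/nondecreasing_seqP => n; apply: S_mono => a; apply: kl_term.
    exact: Ht_gt0.
  exact: Ht_gt0.
have cA := @cvg_Ht _ _ _ HD Hs p; have cB := @cvg_Ht _ _ _ HD Hs q; have cR := cvg_rhs.
set H := fun N => SB N rhs - SB N Hp + SB N Hq.
have cH : cvgn H by apply/cvg_ex; eexists; apply: cvgD (cvgB cR cA) cB.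
have [M hM] := cvg_has_ub cH.
have GE : forall N, G N = SB N F - SB N Hp + SB N Hq.
  by move=> N; rewrite /G S_add (S_add N F (fun a => - Hp a)) S_opp.
have GH : forall N, G N <= H N.
  move=> N; rewrite GE /H; have := S_le N pointwise; lra.
have cG : cvgn G.
  apply/cvg_ex; eexists; apply: nondecreasing_cvgn Gmono _.
  exists M => _ [N _ <-]; apply: le_trans (GH N) _; apply: le_trans (ler_norm _) _.
  by apply: hM; exists N.
have EF : (fun N => SB N F) = (fun N => G N + SB N Hp - SB N Hq).
  by apply/funext => N; rewrite GE; ring.
have cF : (fun N => SB N F) @ \oo --> limn (fun N => SB N F).
  rewrite EF; apply/cvg_ex; eexists; apply: cvgB (cvgD cG cA) cB.
rewrite /KL lattice_sumE.
apply: (ler_cvg_to cF cR).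
by apply: nearW => N; apply: S_le; exact: pointwise.
Qed.

Lemma DD_le x y : DD x y <= l1dist x y.
Proof.
have D0 : (0 : R) < Delta%:R by rewrite ltr0n.
have hd : forall a b : 'I_Delta, `|((a : nat)%:R - (b : nat)%:R) / (Delta%:R : R)| <= 1.
  move=> a b; rewrite normrM normfV (ger0_norm (ltW D0)) ler_pdivrMr // mul1r.
  have ha : ((a : nat)%:R : R) <= Delta%:R by rewrite ler_nat ltnW.
  have hb : ((b : nat)%:R : R) <= Delta%:R by rewrite ler_nat ltnW.
  have a0 : (0 : R) <= (a : nat)%:R by [].
  have b0 : (0 : R) <= (b : nat)%:R by [].
  rewrite ler_norml; apply/andP; split; lra.
have sq : forall t : R, `|t| <= 1 -> t ^+ 2 <= `|t|.
  move=> t ht; rewrite -real_normK ?num_real //; have := normr_ge0 t; nra.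
rewrite /DD /l1dist /dd1 /dd2.
apply: lerD; apply: sq; apply: hd.
Qed.

Lemma cost_le : \sum_x \sum_y gam x y * (DD x y / c2) <= transport_cost gam / c2.
Proof.
have [g0 _] := hg.
rewrite /transport_cost mulr_suml; apply: ler_sum => x _.
rewrite mulr_suml; apply: ler_sum => y _.
rewrite mulrA; apply: ler_wpM2r; first by rewrite invr_ge0 ltW // cc_gt0.
by apply: ler_wpM2l => //; apply: DD_le.
Qed.

End Coupling.

Theorem lemma9 (R : realType) (Delta : nat) (p q : grid Delta -> R) (sigma : R) :
  is_distr p -> is_distr q -> 0 < sigma ->
  KL (Htilde sigma p) (Htilde sigma q) <= EMD p q / (2 * sigma ^+ 2).
Proof.
move=> hp hq Hs.
have HD : (0 < Delta)%N.
  rewrite lt0n; apply/negP => /eqP D0; move: hp => [_ h1]; move: h1.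
  rewrite big1 => [/eqP|x _]; first by rewrite eq_sym oner_eq0.
  by have := ltn_ord x.1; move: (nat_of_ord x.1) => n; rewrite D0.
have c0 : 0 < 2 * sigma ^+ 2 by rewrite mulr_gt0 // exprn_gt0.
rewrite ler_pdivlMr //.
apply: lb_le_inf.
  exists (transport_cost (fun x y => p x * q y)), (fun x y => p x * q y) => //.
  have [p0 p1] := hp; have [q0 q1] := hq.
  split; first by move=> x y; rewrite mulr_ge0.
  split; first by move=> x; rewrite -mulr_sumr q1 mulr1.
  by move=> y; rewrite -mulr_suml p1 mul1r.
move=> _ [gam hg <-].
rewrite -ler_pdivlMr //.
apply: le_trans (KL_le HD Hs hp hq hg) _.
exact: cost_le hg.
Qed.
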